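(* Let $v,w\ge 3$ be integers for which there exist a Steiner triple system $\mathrm{STS}(v)$ and a Steiner triple system $\mathrm{STS}(w)$, and suppose at least one of these two systems admits a zero-sum $k$-flow for some integer $k\ge 3$. Then there exists an $\mathrm{STS}(vw)$ which admits a zero-sum $k$-flow.
   Context: A Steiner triple system $\mathrm{STS}(v)$ is a pair $(X,\mathcal{B})$ where $|X|=v$ and $\mathcal{B}$ is a collection of 3-subsets (blocks) of $X$ such that every 2-subset of $X$ lies in exactly one block. More generally, for a $t$-$(v,k,\lambda)$ design $(X,\mathcal{B})$ and an integer $n\ge 2$, a zero-sum $n$-flow is a map $f:\mathcal{B}\to\{\pm1,\pm2,\ldots,\pm(n-1)\}$ such that for every point $x\in X$, $\sum_{B\in\mathcal{B},\,x\in B} f(B)=0$ (equivalently, a vector with entries in $\{\pm1,\ldots,\pm(n-1)\}$ in the null space of the point–block incidence matrix). *)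

(* Defs.v *)
From mathcomp Require Import all_boot all_order all_algebra.
Set Implicit Arguments. Unset Strict Implicit. Unset Printing Implicit Defensive.
Import Order.TTheory GRing.Theory Num.Theory.

Definition is_STS (v : nat) (B : {set {set 'I_v}}) : Prop :=
  (forall b, b \in B -> #|b| = 3) /\
  (forall x y : 'I_v, x != y ->
     #|[set b in B | (x \in b) && (y \in b)]| = 1).

Definition is_zero_sum_flow (v n : nat) (B : {set {set 'I_v}})
    (f : {set 'I_v} -> int) : Prop :=
  (forall b, b \in B -> (0 < `|f b| < n)%N) /\
  (forall x : 'I_v, (\sum_(b in B | x \in b) f b)%R = 0%R).

Definition has_zero_sum_flow (v n : nat) (B : {set {set 'I_v}}) : Prop :=
  exists f : {set 'I_v} -> int, is_zero_sum_flow n B f.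

(* Main.v *)
Require Import Defs.
From mathcomp Require Import all_boot all_order all_algebra.
From mathcomp Require Import zify ring.
Set Implicit Arguments. Unset Strict Implicit. Unset Printing Implicit Defensive.
Import Order.TTheory GRing.Theory Num.Theory.

Definition STS_T (T : finType) (B : {set {set T}}) : Prop :=
  (forall b, b \in B -> #|b| = 3) /\
  (forall x y : T, x != y ->
     #|[set b in B | (x \in b) && (y \in b)]| = 1).

Definition flow_T (T : finType) (n : nat) (B : {set {set T}})
    (f : {set T} -> int) : Prop :=
  (forall b, b \in B -> (0 < `|f b| < n)%N) /\
  (forall x : T, (\sum_(b in B | x \in b) f b)%R = 0%R).

Lemma transfer (T : finType) n (E : #|T| = n) k (B : {set {set T}}) :
  STS_T B -> (exists f, flow_T k B f) ->
  exists B' : {set {set 'I_n}}, is_STS B' /\ has_zero_sum_flow k B'.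
Proof.
move=> [hB3 hBp] [f [hf1 hf2]].
pose h := fun t : T => cast_ord E (enum_rank t).
pose hi := fun i : 'I_n => enum_val (cast_ord (esym E) i).
have hK : cancel h hi by move=> t; rewrite /h /hi cast_ordK enum_rankK.
have hK' : cancel hi h by move=> i; rewrite /h /hi enum_valK cast_ordKV.
have hinj : injective h := can_inj hK.
have Iinj : injective (fun b : {set T} => h @: b) := imset_inj hinj.
have preK : forall b : {set T}, h @^-1: (h @: b) = b.
  by move=> b; apply/setP => t; rewrite inE mem_imset.
exists [set [set h t | t in b] | b : {set T} in B]; split; first split.
- by move=> b' /imsetP [b Bb] ->; rewrite card_imset // hB3.
- move=> x' y' nxy.
  rewrite -(hK' x') -(hK' y') in nxy *.
  set x := hi x' in nxy *; set y := hi y' in nxy *.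
  have nxy0 : x != y by apply: contra nxy => /eqP ->.
  have -> : [set b' in [set [set h t | t in b] | b : {set T} in B] | (h x \in b') && (h y \in b')] =
            [set [set h t | t in b] | b : {set T} in [set b in B | (x \in b) && (y \in b)]].
    apply/setP => b'; rewrite !inE; apply/andP/imsetP.
    + move=> [/imsetP [b Bb ->]]; rewrite !mem_imset // => hxy.
      by exists b; rewrite // inE Bb.
    + move=> [b]; rewrite inE => /andP [Bb hxy] ->.
      by rewrite (imset_f (fun b : {set T} => h @: b)) // !mem_imset.
  by rewrite card_imset // hBp.
- exists (fun b' : {set 'I_n} => f (h @^-1: b')); split.
  + by move=> b' /imsetP [b Bb] ->; rewrite preK hf1.
  + move=> x'; rewrite -(hK' x'); set x := hi x'.
    rewrite -[RHS](hf2 x).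
    have -> : (\sum_(b' in [set [set h t | t in b] | b : {set T} in B] | h x \in b') f (h @^-1: b'))%R =
              (\sum_(b' in [set [set h t | t in b] | b : {set T} in [set b in B | x \in b]]) f (h @^-1: b'))%R.
      apply: eq_bigl => b'; idtac; apply/andP/imsetP.
      * move=> [/imsetP [b Bb ->]]; rewrite mem_imset // => hx.
        by exists b; rewrite // inE Bb.
      * move=> [b]; rewrite inE => /andP [Bb hx] ->.
        by rewrite (imset_f (fun b : {set T} => h @: b)) // !mem_imset.
    rewrite big_imset /=; last by move=> b1 b2 _ _; apply: Iinj.
    rewrite [RHS]big_mkcondr /= [LHS]big_mkcond /=.
    rewrite [RHS]big_mkcond /=; apply: eq_bigr => b _; rewrite inE preK; by case: (b \in B).
Qed.

Lemma card_cond (T : finType) (A : {set T}) (P : pred T) :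
  #|[set b in A | P b]| = \sum_(b in A) (P b : nat).
Proof.
rewrite -sum1_card big_mkcond [RHS]big_mkcond /=; apply: eq_bigr => b _.
by rewrite inE; case: (b \in A); case: (P b).
Qed.

Lemma STS_odd (T : finType) (B : {set {set T}}) : STS_T B -> 0 < #|T| -> odd #|T|.
Proof.
move=> [hB3 hBp] /card_gt0P [x0 _].
have E : #|T|.-1 = \sum_(y | y != x0) #|[set b in B | (x0 \in b) && (y \in b)]|.
  rewrite -(cardC1 x0) -sum1_card; apply: eq_bigr => y hy; rewrite hBp // eq_sym //.
have H2 : 2 %| #|T|.-1.
  rewrite E; under eq_bigr => y _ do rewrite card_cond.
  rewrite exchange_big /=; apply: dvdn_sum => b Bb.
  case x0b: (x0 \in b); last by rewrite big1.
  have -> : \sum_(y | y != x0) ((true && (y \in b)) : nat) = #|b :\ x0|.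
    rewrite -sum1_card [RHS]big_mkcond /= [LHS]big_mkcond /=.
    by apply: eq_bigr => y _; rewrite !inE; case: (y != x0); case: (y \in b).
  by move: (cardsD1 x0 b); rewrite x0b hB3 // add1n => -[<-].
have n0 : 0 < #|T| by apply/card_gt0P; exists x0.
by rewrite -(prednK n0) /= -dvdn2 H2.
Qed.
Import GRing.Theory.

Definition Ablk m w (b1 : {set 'I_m.+3}) (y : 'I_w) : {set 'I_m.+3 * 'I_w} :=
  [set (x, y) | x in b1].
Definition Gblk m w (b2 : {set 'I_w}) (g : {ffun 'I_w -> 'I_m.+3}) :
  {set 'I_m.+3 * 'I_w} := [set (g s, s) | s in b2].

Lemma memA m w (b1 : {set 'I_m.+3}) (y : 'I_w) p :
  (p \in Ablk b1 y) = (p.2 == y) && (p.1 \in b1).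
Proof.
case: p => a c; apply/imsetP/andP => /=.
- by case=> x0 hx0 [-> ->].
- by case=> /eqP -> ha; exists a.
Qed.

Lemma memG m w (b2 : {set 'I_w}) (g : {ffun 'I_w -> 'I_m.+3}) p :
  (p \in Gblk b2 g) = (p.2 \in b2) && (g p.2 == p.1).
Proof.
case: p => a c; apply/imsetP/andP => /=.
- by case=> s hs [-> ->].
- by case=> hc /eqP <-; exists c.
Qed.

Lemma cardA m w (b1 : {set 'I_m.+3}) (y : 'I_w) : #|Ablk b1 y| = #|b1|.
Proof. by rewrite card_imset // => a c [->]. Qed.

Lemma cardG m w (b2 : {set 'I_w}) (g : {ffun 'I_w -> 'I_m.+3}) : #|Gblk b2 g| = #|b2|.
Proof. by rewrite card_imset // => a c [_ ->]. Qed.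

Lemma projA m w (b1 : {set 'I_m.+3}) (y : 'I_w) : [set p.1 | p in Ablk b1 y] = b1.
Proof. by rewrite -imset_comp /= imset_id. Qed.

Lemma projG m w (b2 : {set 'I_w}) (g : {ffun 'I_w -> 'I_m.+3}) :
  [set p.2 | p in Gblk b2 g] = b2.
Proof. by rewrite -imset_comp /= imset_id. Qed.

Lemma AneG m w (b1 : {set 'I_m.+3}) (y : 'I_w) b2 g :
  1 < #|b1| -> Ablk b1 y <> Gblk b2 g.
Proof.
move=> /card_gt1P [a [c [ha hc nac]]] E.
have := memA b1 y (a, y); have := memA b1 y (c, y).
rewrite E !memG /= ha hc eqxx /= => /andP [_ /eqP h1] /andP [_ /eqP h2].
by move: nac; rewrite -h1 -h2 eqxx.
Qed.

Lemma three (T : finType) (b : {set T}) a : #|b| = 3 -> a \in b ->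
  exists c d, [/\ c \in b, d \in b, c != a, d != a & c != d /\ b :\ a = [set c; d]].
Proof.
move=> h3 ha; have : #|b :\ a| == 2 by move: (cardsD1 a b); rewrite ha h3 add1n => -[<-].
case/cards2P => c [d [ncd E]].
have hc : c \in b :\ a by rewrite E !inE eqxx.
have hd : d \in b :\ a by rewrite E !inE eqxx orbT.
move: hc hd; rewrite !inE => /andP [nca cb] /andP [nda db].
by exists c, d.
Qed.

Lemma three2 (T : finType) (b : {set T}) a a' : #|b| = 3 -> a \in b -> a' \in b ->
  a' != a -> exists z, [/\ z \in b, z != a, z != a' & b :\ a = [set a'; z]].
Proof.
move=> h3 ha ha' naa; case: (three h3 ha) => c [d [cb db nca nda [ncd E]]].
have : a' \in b :\ a by rewrite !inE naa.
rewrite E !inE => /orP [] /eqP ->.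
- by exists d; split => //; rewrite eq_sym.
- by exists c; split => //; rewrite setUC.
Qed.

Lemma sum3 (R : zmodType) (T : finType) (b : {set T}) a c d (F : T -> R) :
  a \in b -> c != d -> b :\ a = [set c; d] ->
  (\sum_(s in b) F s = F a + (F c + F d))%R.
Proof.
move=> ha ncd E; rewrite (big_setD1 a ha) E big_setU1 ?big_set1 //=.
by rewrite inE.
Qed.

Lemma uniq_card (T : finType) (S : {set T}) (P : pred T) b0 :
  b0 \in S -> P b0 -> (forall b, b \in S -> P b -> b = b0) ->
  #|[set b in S | P b]| = 1.
Proof.
move=> h1 h2 h3; have -> : [set b in S | P b] = [set b0]; last by rewrite cards1.
apply/setP => b; rewrite !inE; apply/andP/eqP.
- by case=> h4 h5; apply: h3.
- by move=> ->.
Qed.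

Lemma sts_uniq (T : finType) (B : {set {set T}}) x x' : STS_T B -> x != x' ->
  exists b1, [/\ b1 \in B, x \in b1, x' \in b1 &
     forall b, b \in B -> x \in b -> x' \in b -> b = b1].
Proof.
move=> [_ hp] nx; have /eqP/cards1P [b1 E] := hp _ _ nx.
have : b1 \in [set b in B | (x \in b) && (x' \in b)] by rewrite E inE.
rewrite inE => /andP [hb /andP [h1 h2]]; exists b1; split => // b hb' hx hx'.
have : b \in [set b in B | (x \in b) && (x' \in b)] by rewrite inE hb' hx hx'.
by rewrite E inE => /eqP.
Qed.

Definition TA m w (B1 : {set {set 'I_m.+3}}) : {set {set 'I_m.+3 * 'I_w}} :=
  [set Ablk b1 y | b1 in B1, y in [set: 'I_w]].
Definition goodG m w (B2 : {set {set 'I_w}}) :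
  {set {set 'I_w} * {ffun 'I_w -> 'I_m.+3}} :=
  [set pg : {set 'I_w} * {ffun 'I_w -> 'I_m.+3} | (pg.1 \in B2) && (\sum_(s in pg.1) pg.2 s == 0)%R].
Definition TB m w (B2 : {set {set 'I_w}}) : {set {set 'I_m.+3 * 'I_w}} :=
  [set Gblk pg.1 pg.2 | pg in goodG m B2].
Definition mkg m w (y y2 : 'I_w) (x t : 'I_m.+3) : {ffun 'I_w -> 'I_m.+3} :=
  [ffun s => if s == y then x else if s == y2 then t else (- x - t)%R].

Lemma memTA m w (B1 : {set {set 'I_m.+3}}) (b : {set 'I_m.+3 * 'I_w}) :
  reflect (exists b1 y, b1 \in B1 /\ b = Ablk b1 y) (b \in TA w B1).
Proof.
apply: (iffP imset2P) => [[b1 y h1 _ ->] | [b1 [y [h1 ->]]]].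
- by exists b1, y.
- by exists b1 y; rewrite ?inE.
Qed.

Lemma memTB m w (B2 : {set {set 'I_w}}) (b : {set 'I_m.+3 * 'I_w}) :
  reflect (exists b2 (g : {ffun 'I_w -> 'I_m.+3}), [/\ b2 \in B2, (\sum_(s in b2) g s = 0)%R & b = Gblk b2 g])
     (b \in TB m B2).
Proof.
apply: (iffP imsetP) => [[[b2 g]] | [b2 [g [h1 h2 ->]]]].
- by rewrite inE /= => /andP [h1 /eqP h2] ->; exists b2, g.
- by exists (b2, g) => //; rewrite inE /= h1 h2 eqxx.
Qed.

Lemma mkg_sum m w (b2 : {set 'I_w}) y y2 y3 (x t : 'I_m.+3) :
  y \in b2 -> y2 != y -> y3 != y -> y3 != y2 -> y2 != y3 -> b2 :\ y = [set y2; y3] ->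
  (\sum_(s in b2) mkg y y2 x t s = 0)%R.
Proof.
move=> hy n2 n3 n32 n23 E; rewrite (sum3 _ hy n23 E) !ffunE eqxx (negbTE n2) eqxx.
rewrite (negbTE n3) (negbTE n32); ring.
Qed.

Lemma BB_STS m w (B1 : {set {set 'I_m.+3}}) (B2 : {set {set 'I_w}}) :
  STS_T B1 -> STS_T B2 -> STS_T (TA w B1 :|: TB m B2).
Proof.
move=> S1 S2; have [h13 _] := S1; have [h23 _] := S2; split.
  move=> b; rewrite inE => /orP [/memTA [b1 [y [h ->]]] | /memTB [b2 [g [h _ ->]]]].
  - by rewrite cardA h13.
  - by rewrite cardG h23.
case=> x y [x' y'] nP.
case: (eqVneq y y') => [eyy | nyy].
-
  subst y'; have nx : x != x' by apply: contra nP => /eqP ->.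
  have [b1 [hb1 hx hx' hu]] := sts_uniq S1 nx.
  apply: (@uniq_card _ _ _ (Ablk b1 y)).
  + by rewrite inE; apply/orP; left; apply/memTA; exists b1, y.
  + by rewrite /= !memA /= eqxx hx hx'.
  + move=> b; rewrite inE => /orP [/memTA [b1' [y0 [h ->]]] | /memTB [b2 [g [h _ ->]]]].
    * rewrite /= !memA /= => /andP [/andP [/eqP <- h1] /andP [_ h2]].
      by rewrite (hu _ h h1 h2).
    * rewrite /= !memG /= => /andP [/andP [_ /eqP h1] /andP [_ /eqP h2]].
      by move: nx; rewrite -h1 -h2 eqxx.
- have [b2 [hb2 hy hy' hu]] := sts_uniq S2 nyy.
  have ny : y' != y by rewrite eq_sym.
  have [z [hz nzy nzy' E]] := three2 (h23 _ hb2) hy hy' ny.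
  have nyz : y' != z by rewrite eq_sym.
  apply: (@uniq_card _ _ _ (Gblk b2 (mkg y y' x x'))).
  + rewrite inE; apply/orP; right; apply/memTB; exists b2, (mkg y y' x x').
    by split => //; apply: (@mkg_sum _ _ b2 y y' z x x').
  + by rewrite /= !memG /= hy hy' !ffunE eqxx (negbTE ny) !eqxx.
  + move=> b; rewrite inE => /orP [/memTA [b1' [y0 [h ->]]] | /memTB [b2' [g [h hs ->]]]].
    * rewrite /= !memA /= => /andP [/andP [/eqP e1 _] /andP [/eqP e2 _]].
      by move: nyy; rewrite e1 e2 eqxx.
    * rewrite /= !memG /= => /andP [/andP [h1 /eqP g1] /andP [h2 /eqP g2]].
      have e2 := hu _ h h1 h2; subst b2'.
      apply: eq_in_imset => s hs'.
      have gz : g z = (- x - x')%R.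
        move: hs; rewrite (sum3 _ hy nyz E) g1 g2 => hs.
        have -> : g z = ((x + (x' + g z)) - x - x')%R by ring.
        by rewrite hs; ring.
      rewrite !ffunE; congr (_, _).
      case: (eqVneq s y) => [-> | nsy]; first by rewrite g1.
      have : s \in b2 :\ y by rewrite !inE nsy.
      rewrite E !inE => /orP [] /eqP ->; first by rewrite eqxx g2.
      by rewrite (negbTE nzy') gz.
Qed.

Definition rk2 w (b2 : {set 'I_w}) (s : 'I_w) := #|[set s' in b2 | s' < s]|.
Definition form m w (b : {set 'I_m.+3 * 'I_w}) : 'I_m.+3 :=
  (\sum_(p in b) (#|[set q in b | (q.2 < p.2)%N]|)%:R * p.1)%R.
Definition chi (i : nat) : int :=
  if i == 0 then (-2)%R else if i == 2 then 1%R else if odd i then 1%R else (-1)%R.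

Lemma form_G m w (b2 : {set 'I_w}) (g : {ffun 'I_w -> 'I_m.+3}) :
  form (Gblk b2 g) = (\sum_(s in b2) (rk2 b2 s)%:R * g s)%R.
Proof.
rewrite /form big_imset /=; last by move=> a c _ _ [_ ->].
apply: eq_bigr => s hs; congr (_%:R * _)%R.
have -> : [set q in Gblk b2 g | q.2 < s] = Gblk [set s' in b2 | s' < s] g.
  apply/setP => -[a c]; rewrite !inE !memG !inE /=.
  by case: (c \in b2); case: (g c == a); case: (c < s).
by rewrite cardG.
Qed.

Lemma rk2_lt w (b2 : {set 'I_w}) s : #|b2| = 3 -> s \in b2 -> rk2 b2 s < 3.
Proof.
move=> h3 hs; have : #|b2 :\ s| = 2 by move: (cardsD1 s b2); rewrite hs h3 add1n => -[<-].
move=> <-; rewrite ltnS; apply: subset_leq_card; apply/subsetP => s'.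
by rewrite !inE => /andP [h1 h2]; rewrite h1 andbT neq_ltn h2.
Qed.

Lemma rk2_mono w (b2 : {set 'I_w}) (s1 s2 : 'I_w) : s1 \in b2 -> s1 < s2 -> rk2 b2 s1 < rk2 b2 s2.
Proof.
move=> h1 lt; apply: proper_card; apply/properP; split.
- apply/subsetP => s; rewrite !inE => /andP [-> h] /=; exact: ltn_trans h lt.
- by exists s1; rewrite !inE ?h1 ?lt // ltnn andbF.
Qed.

Lemma rk2_neq w (b2 : {set 'I_w}) s1 s2 : s1 \in b2 -> s2 \in b2 -> s1 != s2 ->
  rk2 b2 s1 != rk2 b2 s2.
Proof.
move=> h1 h2 ne; have : (s1 : nat) != s2 by [].
rewrite neq_ltn => /orP [] lt.
- by rewrite neq_ltn (rk2_mono h1 lt).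
- by rewrite neq_ltn (rk2_mono h2 lt) orbT.
Qed.

Lemma unit_diff m (a b : nat) : odd m.+3 -> a < 3 -> b < 3 -> a != b ->
  ((a%:R - b%:R : 'I_m.+3) \is a GRing.unit)%R.
Proof.
move=> od ha hb nab.
have u1 : forall c : nat, (c == 1) || (c == 2) -> ((c%:R : 'I_m.+3) \is a GRing.unit)%R.
  move=> c /orP [] /eqP ->; rewrite (@unitZpE (m.+3)) //.
  - exact: coprimen1.
  - by rewrite coprimen2.
case: (ltngtP a b) => [lt | lt | eq]; last by rewrite eq eqxx in nab.
- rewrite -opprB -natrB ?(ltnW lt) // unitrN; apply: u1; lia.
- rewrite -natrB ?(ltnW lt) //; apply: u1; lia.
Qed.

Lemma chi_sum m : odd m.+3 -> (\sum_(i < m.+3) chi i = 0)%R.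
Proof.
move=> od; have [j ->] : exists j, m = j.*2.
  by exists m./2; rewrite halfK; move: od => /= /negPn; case: (odd m) => //; rewrite subn0.
elim: j => [|j IH]; first by rewrite !big_ord_recr big_ord0 /chi /=.
rewrite doubleS (big_ord_recr j.*2.+4) (big_ord_recr j.*2.+3) /= IH /chi /= odd_double /=. by rewrite add0r subrr.
Qed.

Definition FF m w (B1 : {set {set 'I_m.+3}}) (f : {set 'I_m.+3} -> int)
  (b : {set 'I_m.+3 * 'I_w}) : int :=
  if b \in TA w B1 then f [set p.1 | p in b] else chi (form b).

Lemma chi_bound k i : 3 <= k -> 0 < `|chi i| < k.
Proof.
move=> hk; rewrite /chi; case: ifP => _; first by move: hk; case: k => [|[|[|k]]].
case: ifP => _; first by move: hk; case: k => [|[|[|k]]].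
by case: ifP => _; move: hk; case: k => [|[|[|k]]].
Qed.

Lemma BB_flow m w (B1 : {set {set 'I_m.+3}}) (B2 : {set {set 'I_w}}) f k :
  STS_T B1 -> flow_T k B1 f -> STS_T B2 -> 3 <= k ->
  flow_T k (TA w B1 :|: TB m B2) (@FF m w B1 f).
Proof.
move=> S1 [hf1 hf2] S2 hk; have [h13 _] := S1; have [h23 _] := S2.
have od : odd m.+3 by have := STS_odd S1; rewrite card_ord; apply.
have dis : forall b, b \in TA w B1 -> b \in TB m B2 -> False.
  move=> b /memTA [b1 [y [hb1 ->]]] /memTB [b2 [g [_ _ E]]].
  by apply: (AneG (b1 := b1) (y := y) (b2 := b2) (g := g)) => //; rewrite h13.
have FA : forall b1 y, b1 \in B1 -> @FF m w B1 f (Ablk b1 y) = f b1.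
  move=> b1 y hb1; rewrite /FF ifT ?projA //; apply/memTA; by exists b1, y.
have FB : forall b, b \in TB m B2 -> @FF m w B1 f b = chi (form b).
  move=> b hb; rewrite /FF ifF //; apply/negP => hA; exact: dis hA hb.
split.
  move=> b; rewrite inE => /orP [hA | hB].
  - case/memTA: (hA) => b1 [y [hb1 E]]; rewrite E FA //; exact: hf1.
  - rewrite FB //; exact: chi_bound.
case=> a y.
rewrite (big_setIDcond _ _ (TA w B1)).
have -> : (TA w B1 :|: TB m B2) :&: TA w B1 = TA w B1 by rewrite setUK.
have -> : (TA w B1 :|: TB m B2) :\: TA w B1 = TB m B2.
  apply/setP => b; rewrite !inE; case hA: (b \in TA w B1); case hB: (b \in TB m B2) => //=.
  by exfalso; exact: dis hA hB.
have -> : (\sum_(b in TA w B1 | (a, y) \in b) @FF m w B1 f b = 0)%R.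
  apply: eq_trans (hf2 a).
  transitivity (\sum_(b in [set Ablk b1 y | b1 in [set b1 in B1 | a \in b1]]) @FF m w B1 f b)%R.
    apply: eq_bigl => b; apply/andP/imsetP.
    - move=> [/memTA [b1 [y0 [hb1 ->]]]]; rewrite memA /= => /andP [/eqP <- ha].
      by exists b1; rewrite // inE hb1.
    - move=> [b1]; rewrite inE => /andP [hb1 ha] ->; split.
      + by apply/memTA; exists b1, y.
      + by rewrite memA /= eqxx.
  rewrite big_imset /=; last first.
    by move=> b1 b1' _ _ E; rewrite -(projA b1 y) E projA.
  rewrite big_mkcond [RHS]big_mkcond /=; apply: eq_bigr => b1 _; rewrite inE.
  by case hb1: (b1 \in B1) => //=; case: (a \in b1); rewrite ?FA.
rewrite /= add0r.
transitivity (\sum_(b in TB m B2 | (a, y) \in b) chi (form b))%R.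
  by apply: eq_bigr => b /andP [hb _]; rewrite FB.
rewrite (partition_big (fun b : {set 'I_m.+3 * 'I_w} => [set q.2 | q in b])
          (fun b2 => (b2 \in B2) && (y \in b2))) /=; last first.
  move=> b /andP [/memTB [b2 [g [hb2 _ ->]]]]; rewrite projG memG /= => /andP [hy _].
  by rewrite hb2.
apply: big1 => b2 /andP [hb2 hy].
have [c [d [hc hd nc nd [ncd E]]]] := three (h23 _ hb2) hy.
transitivity (\sum_(b in [set Gblk b2 (mkg y c a t) | t in [set: 'I_m.+3]]) chi (form b))%R.
  apply: eq_bigl => b; apply/andP/imsetP.
  - move=> [/andP [/memTB [b2' [g [hb2' hs ->]]]]]; rewrite memG projG /=.
    move=> /andP [hy' /eqP gy] /eqP e; subst b2'.
    exists (g c); first by rewrite inE. apply: eq_in_imset => s hs'.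
    have gd : g d = (- a - g c)%R.
      move: hs; rewrite (sum3 _ hy ncd E) gy => hs.
      have -> : g d = ((a + (g c + g d)) - a - g c)%R by ring.
      by rewrite hs; ring.
    rewrite !ffunE; congr (_, _).
    case: (eqVneq s y) => [-> | nsy]; first by rewrite gy.
    have : s \in b2 :\ y by rewrite !inE nsy.
    rewrite E !inE => /orP [] /eqP ->; first by rewrite eqxx.
    by rewrite eq_sym (negbTE ncd) gd.
  - move=> [t _ ->]; split; last by rewrite projG.
    apply/andP; split; last by rewrite memG /= hy !ffunE !eqxx.
    apply/memTB; exists b2, (mkg y c a t); split => //.
    apply: (@mkg_sum _ _ b2 y c d a t) => //; by rewrite eq_sym.
rewrite big_imset /=; last first.
  move=> t1 t2 _ _ Et.
  have : (t1, c) \in Gblk b2 (mkg y c a t1) by rewrite memG /= hc !ffunE (negbTE nc) !eqxx.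
  by rewrite Et memG /= !ffunE (negbTE nc) !eqxx => /andP [_ /eqP].
pose r := fun s => ((rk2 b2 s)%:R : 'I_m.+3)%R.
pose Ef := fun t : 'I_m.+3 => (r y * a + (r c * t + r d * (- a - t)))%R.
have formE : forall t, form (Gblk b2 (mkg y c a t)) = Ef t.
  move=> t; rewrite form_G (sum3 _ hy ncd E) !ffunE eqxx (negbTE nc) eqxx.
  by rewrite (negbTE nd) eq_sym (negbTE ncd).
have injE : injective Ef.
  move=> t1 t2 Et; have u := unit_diff od (rk2_lt (h23 _ hb2) hc) (rk2_lt (h23 _ hb2) hd)
     (rk2_neq hc hd ncd).
  apply: (mulrI u).
  have -> : ((r c - r d) * t1 = Ef t1 - r y * a + r d * a)%R by rewrite /Ef; ring.
  by rewrite Et /Ef; ring.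
transitivity (\sum_(t < m.+3) chi (Ef t))%R.
  by apply: eq_big => t; rewrite ?inE // formE.
rewrite -(reindex_inj (P := xpredT) (F := fun i : 'I_m.+3 => chi i) injE).
exact: chi_sum.
Qed.

Unset Implicit Arguments.

Theorem mainTheorem1 (v w k : nat) (hv : (3 <= v)%N) (hw : (3 <= w)%N)
    (hk : (3 <= k)%N)
    (B1 : {set {set 'I_v}}) (B2 : {set {set 'I_w}})
    (h1 : is_STS B1) (h2 : is_STS B2)
    (hflow : has_zero_sum_flow k B1 \/ has_zero_sum_flow k B2) :
  exists B : {set {set 'I_(v * w)}}, is_STS B /\ has_zero_sum_flow k B.
Proof.
case: hflow => [[f hf] | [f hf]].
- move: hv B1 h1 f hf; case: v => [|[|[|m]]] // _ B1 h1 f hf.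
  apply: (@transfer _ _ _ k (TA w B1 :|: TB m B2)).
  + by rewrite card_prod !card_ord.
  + exact: BB_STS.
  + by exists (@FF m w B1 f); apply: BB_flow.
- move: hw B2 h2 f hf; case: w => [|[|[|n]]] // _ B2 h2 f hf.
  apply: (@transfer _ _ _ k (TA v B2 :|: TB n B1)).
  + by rewrite card_prod !card_ord mulnC.
  + exact: BB_STS.
  + by exists (@FF n v B2 f); apply: BB_flow.
Qed.
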